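(* Let $R$ and $H$ be hyperdomains, $X=\operatorname{Spec}R$ and $Y=\operatorname{Spec}H$ with their structure sheaves $\mathcal{O}_X,\mathcal{O}_Y$. Then there is a natural bijection \[\operatorname{Hom}(R,H)\cong\operatorname{Hom}(Y,X)\] between homomorphisms of hyperrings $R\to H$ and morphisms of locally hyperringed spaces $(Y,\mathcal{O}_Y)\to(X,\mathcal{O}_X)$; a homomorphism $\varphi$ corresponds to the morphism with underlying map $\mathfrak{p}\mapsto\varphi^{-1}(\mathfrak{p})$, and a morphism to the homomorphism obtained on global sections.
   Context: Hyperring: a set with a hyperoperation $+$ into nonempty subsets (extended to subsets by $A+B=\bigcup a+b$) making $(R,+,0)$ a canonical hypergroup (commutative, associative, unique $0$ with $0+x=\{x\}$, unique $-x$ with $0\in x+(-x)$, $x\in y+z\iff z\in x+(-y)$), and a commutative monoid $(R,\cdot,1)$, with $x(y+z)=xy+xz$, $0x=0$, $0\ne1$. Homomorphisms satisfy $\varphi(a+b)\subseteq\varphi(a)+\varphi(b)$, $\varphi(ab)=\varphi(a)\varphi(b)$. A hyperdomain has no zero-divisors. Hyperideals, primes, $\operatorname{Spec}$ with the Zariski topology and $D(f)$ are as for rings. Localization $T^{-1}R$ at a multiplicative submonoid $T$: pairs modulo $(r_1,t_1)\sim(r_2,t_2)\iff xr_1t_2=xr_2t_1$ for some $x\in T$, with $\frac{r_1}{t_1}+\frac{r_2}{t_2}=\{\frac y{t_1t_2}\mid y\in r_1t_2+t_1r_2\}$; $R_\mathfrak{p}=(R\setminus\mathfrak{p})^{-1}R$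 has a unique maximal hyperideal. The structure sheaf: $\mathcal{O}_X(U)$ is the set of maps $s:U\to\bigsqcup_{\mathfrak{p}\in U}R_\mathfrak{p}$, $s(\mathfrak{p})\in R_\mathfrak{p}$, locally of the form $\mathfrak{q}\mapsto\frac af$ with $f\notin\mathfrak{q}$, with pointwise multiplication and $s+t=\{r\mid r(\mathfrak{p})\in s(\mathfrak{p})+t(\mathfrak{p})\ \forall\mathfrak{p}\}$; for a hyperdomain this is a sheaf of hyperrings with $\mathcal{O}_X(X)\cong R$ and stalks $\mathcal{O}_{X,\mathfrak{p}}\cong R_\mathfrak{p}$. A morphism of locally hyperringed spaces $(Y,\mathcal{O}_Y)\to(X,\mathcal{O}_X)$ is a pair $(f,f^\#)$ of a continuous map $f:Y\to X$ and a morphism of sheaves of hyperrings $f^\#:\mathcal{O}_X\to f_*\mathcal{O}_Y$ (hyperring homomorphisms compatible with restrictions) such that each induced stalk map $\mathcal{O}_{X,f(\mathfrak{p})}\to\mathcal{O}_{Y,\mathfrak{p}}$ is local, i.e. the preimage of the maximal hyperideal is the maximal hyperideal. *)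

(* Defs.v *)
From Stdlib Require Import Classical FunctionalExtensionality PropExtensionality.
Set Implicit Arguments.
Unset Strict Implicit.

(* Hyperrings (Krasner-style).  [hadd x y z] means  z \in x + y.       *)
Record hyperring := HyperRing {
  hcar :> Type;
  hadd : hcar -> hcar -> hcar -> Prop;
  hmul : hcar -> hcar -> hcar;
  hzero : hcar;
  hone : hcar;
  hneg : hcar -> hcar;
  hadd_nonempty : forall x y, exists z, hadd x y z;
  hadd_comm : forall x y z, hadd x y z <-> hadd y x z;
  hadd_assoc : forall x y w u,
      (exists v, hadd x y v /\ hadd v w u) <-> (exists v, hadd y w v /\ hadd x v u);
  hadd_0l : forall x z, hadd hzero x z <-> z = x;
  hadd_zero_unique : forall e, (forall x z, hadd e x z <-> z = x) -> e = hzero;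
  hadd_negr : forall x, hadd x (hneg x) hzero;
  hneg_unique : forall x y, hadd x y hzero -> y = hneg x;
  hadd_rev : forall x y z, hadd y z x <-> hadd x (hneg y) z;
  hmul_assoc : forall x y z, hmul x (hmul y z) = hmul (hmul x y) z;
  hmul_comm : forall x y, hmul x y = hmul y x;
  hmul_1l : forall x, hmul hone x = x;
  hmul_distr : forall x y z u,
      (exists w, hadd y z w /\ u = hmul x w) <-> hadd (hmul x y) (hmul x z) u;
  hmul_0l : forall x, hmul hzero x = hzero;
  hzero_neq_one : hzero <> hone
}.

Definition hyperdomain (R : hyperring) : Prop :=
  forall x y : R, hmul x y = hzero R -> x = hzero R \/ y = hzero R.

(* Raw (relational) hyperring-like structures, used for R itself, for  *)
(* rings of sections O_X(U) and for stalks.                            *)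
Record rstr := RStr {
  rcar : Type;
  radd : rcar -> rcar -> rcar -> Prop;   (* radd x y z : z \in x + y *)
  rmul : rcar -> rcar -> rcar -> Prop;   (* rmul x y z : z = x * y *)
  rzero : rcar -> Prop;                  (* rzero z : z = 0 *)
  rone : rcar -> Prop                    (* rone z : z = 1 *)
}.

Definition rstr_of (R : hyperring) : rstr :=
  @RStr (hcar R) (@hadd R) (fun x y z => z = hmul x y)
        (fun z => z = hzero R) (fun z => z = hone R).

Definition is_hom (A B : rstr) (phi : rcar A -> rcar B) : Prop :=
  (forall x y z, @radd A x y z -> @radd B (phi x) (phi y) (phi z)) /\
  (forall x y z, @rmul A x y z -> @rmul B (phi x) (phi y) (phi z)) /\
  (forall z, @rzero A z -> @rzero B (phi z)) /\
  (forall z, @rone A z -> @rone B (phi z)).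

Arguments is_hom : clear implicits.

Definition hyperideal (A : rstr) (I : rcar A -> Prop) : Prop :=
  (forall z, @rzero A z -> I z) /\
  (forall x y z, I x -> I y -> @radd A x y z -> I z) /\
  (forall r x z, I x -> @rmul A r x z -> I z).

Definition proper (A : rstr) (I : rcar A -> Prop) : Prop :=
  forall o, @rone A o -> ~ I o.

Definition maximal_hyperideal (A : rstr) (M : rcar A -> Prop) : Prop :=
  hyperideal M /\ proper M /\
  forall J, hyperideal J -> proper J -> (forall x, M x -> J x) -> forall x, J x -> M x.

Definition prime_hyperideal (R : hyperring) (p : R -> Prop) : Prop :=
  @hyperideal (rstr_of R) p /\ ~ p (hone R) /\
  forall a b, p (hmul a b) -> p a \/ p b.

Definition Spec (R : hyperring) := { p : R -> Prop | prime_hyperideal p }.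
Definition pt (R : hyperring) (p : Spec R) : R -> Prop := proj1_sig p.

Definition is_open (R : hyperring) (U : Spec R -> Prop) : Prop :=
  forall p, U p -> exists f, ~ pt p f /\ forall q, ~ pt q f -> U q.

Section Loc.
Variables (R : hyperring) (p : Spec R).

Definition loc_rel (x y : R * R) : Prop :=
  ~ pt p (snd x) /\ ~ pt p (snd y) /\
  exists u, ~ pt p u /\
    hmul u (hmul (fst x) (snd y)) = hmul u (hmul (fst y) (snd x)).

Definition Loc := { c : R * R -> Prop |
  exists r t, ~ pt p t /\ c = loc_rel (r, t) }.

Definition lrep (c : Loc) (x : R * R) : Prop := proj1_sig c x.

Definition loc_add (c1 c2 c3 : Loc) : Prop :=
  exists r1 t1 r2 t2 y, lrep c1 (r1, t1) /\ lrep c2 (r2, t2) /\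
    hadd (hmul r1 t2) (hmul t1 r2) y /\ lrep c3 (y, hmul t1 t2).
Definition loc_mul (c1 c2 c3 : Loc) : Prop :=
  exists r1 t1 r2 t2, lrep c1 (r1, t1) /\ lrep c2 (r2, t2) /\
    lrep c3 (hmul r1 r2, hmul t1 t2).
Definition loc_zero (c : Loc) : Prop := lrep c (hzero R, hone R).
Definition loc_one (c : Loc) : Prop := lrep c (hone R, hone R).
End Loc.

Section Sheaf.
Variable R : hyperring.

Definition is_locfrac (U : Spec R -> Prop) (s : forall p, U p -> Loc p) : Prop :=
  forall p (hp : U p), exists V, is_open V /\ V p /\ (forall q, V q -> U q) /\
    exists a f, forall q (hq : U q), V q -> ~ pt q f /\ lrep (s q hq) (a, f).

Definition sec (U : Spec R -> Prop) := { s : forall p, U p -> Loc p | is_locfrac s }.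
Definition sval (U : Spec R -> Prop) (s : sec U) : forall p, U p -> Loc p := proj1_sig s.
Arguments sval {U} s p h.

Definition sec_rstr (U : Spec R -> Prop) : rstr :=
  @RStr (sec U)
    (fun s t r => forall p hp, loc_add (sval s p hp) (sval t p hp) (sval r p hp))
    (fun s t r => forall p hp, loc_mul (sval s p hp) (sval t p hp) (sval r p hp))
    (fun s => forall p hp, loc_zero (sval s p hp))
    (fun s => forall p hp, loc_one (sval s p hp)).

Definition restricts (U V : Spec R -> Prop) (s : sec U) (t : sec V) : Prop :=
  forall p (hU : U p) (hV : V p), sval t p hV = sval s p hU.

Definition is_const_sec (r : R) (s : sec (fun _ : Spec R => True)) : Prop :=
  forall p h, lrep (sval s p h) (r, hone R).

Record germ (p : Spec R) := Germ {
  gU : Spec R -> Prop;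
  gU_open : is_open gU;
  gU_p : gU p;
  gs : sec gU }.

Definition germ_eq (p : Spec R) (g1 g2 : germ p) : Prop :=
  exists W, is_open W /\ W p /\ (forall q, W q -> gU g1 q /\ gU g2 q) /\
    forall q h1 h2, W q -> sval (gs g1) q h1 = sval (gs g2) q h2.

Definition Stalk (p : Spec R) := { c : germ p -> Prop | exists g, c = germ_eq g }.

Definition germ_class (p : Spec R) (g : germ p) : Stalk p :=
  exist _ (germ_eq g) (ex_intro _ g eq_refl).

Definition stalk_rstr (p : Spec R) : rstr :=
  @RStr (Stalk p)
    (fun c1 c2 c3 => exists g1 g2 g3,
       proj1_sig c1 g1 /\ proj1_sig c2 g2 /\ proj1_sig c3 g3 /\
       exists W, is_open W /\ W p /\
         (forall q, W q -> gU g1 q /\ gU g2 q /\ gU g3 q) /\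
         forall q h1 h2 h3, W q ->
           loc_add (sval (gs g1) q h1) (sval (gs g2) q h2) (sval (gs g3) q h3))
    (fun c1 c2 c3 => exists g1 g2 g3,
       proj1_sig c1 g1 /\ proj1_sig c2 g2 /\ proj1_sig c3 g3 /\
       exists W, is_open W /\ W p /\
         (forall q, W q -> gU g1 q /\ gU g2 q /\ gU g3 q) /\
         forall q h1 h2 h3, W q ->
           loc_mul (sval (gs g1) q h1) (sval (gs g2) q h2) (sval (gs g3) q h3))
    (fun c => exists g, proj1_sig c g /\
       exists W, is_open W /\ W p /\ (forall q, W q -> gU g q) /\
         forall q h, W q -> loc_zero (sval (gs g) q h))
    (fun c => exists g, proj1_sig c g /\
       exists W, is_open W /\ W p /\ (forall q, W q -> gU g q) /\
         forall q h, W q -> loc_one (sval (gs g) q h)).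
End Sheaf.
Arguments sval {R U} s p h.
Arguments gU {R p} g _.
Arguments gU_open {R p} g _ _.
Arguments gU_p {R p} g.
Arguments gs {R p} g.

Record lhs_morph (R H : hyperring) := LHSMorph {
  mf : Spec H -> Spec R;
  mf_cont : forall U : Spec R -> Prop, is_open U -> is_open (fun q => U (mf q));
  msh : forall U : Spec R -> Prop, is_open U -> sec U -> sec (fun q => U (mf q))
}.
Arguments mf {R H} l _.
Arguments mf_cont {R H} l {U} _ _.
Arguments msh {R H} l {U} _ _.

Section Morph.
Variables (R H : hyperring) (m : lhs_morph R H).

Definition germ_map (q : Spec H) (g : germ (mf m q)) : germ q :=
  @Germ H q (fun q' => gU g (mf m q')) (mf_cont m (gU_open g)) (gU_p g)
        (msh m (gU_open g) (gs g)).

Definition is_morphism : Prop :=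
  (forall U (hU : is_open U),
     is_hom (sec_rstr U) (sec_rstr (fun q => U (mf m q))) (msh m hU)) /\
  (forall U V (hU : is_open U) (hV : is_open V), (forall p, V p -> U p) ->
     forall (s : sec U) (s' : sec V), restricts s s' ->
       restricts (msh m hU s) (msh m hV s')) /\
  (* induced stalk maps are local *)
  (forall q (M : Stalk (mf m q) -> Prop) (N : Stalk q -> Prop),
     maximal_hyperideal (A := stalk_rstr (mf m q)) M ->
     maximal_hyperideal (A := stalk_rstr q) N ->
     forall g : germ (mf m q), M (germ_class g) <-> N (germ_class (germ_map g))).

(* phi : R -> H is the homomorphism induced on global sections,
   via the canonical identifications R = O_X(X), H = O_Y(Y), r |-> r/1 *)
Definition global_hom (phi : R -> H) : Prop :=
  forall (hT : is_open (fun _ : Spec R => True)) (r : R)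
         (s : sec (fun _ : Spec R => True)) (s' : sec (fun _ : Spec H => True)),
    is_const_sec r s -> is_const_sec (phi r) s' -> msh m hT s = s'.
End Morph.

(* Main.v *)
Require Import Defs.
From Stdlib Require Import Classical FunctionalExtensionality PropExtensionality ProofIrrelevance ClassicalEpsilon.
Set Implicit Arguments.
Unset Strict Implicit.

From mathcomp Require classical_sets.
Module ZornAux.
Import classical_sets.
Lemma zorn_sets (T : Type) (P : (T -> Prop) -> Prop) :
  (forall F : (T -> Prop) -> Prop, (forall X, F X -> P X) ->
     (forall X Y, F X -> F Y -> (forall x, X x -> Y x) \/ (forall x, Y x -> X x)) ->
     P (fun x => exists X, F X /\ X x)) ->
  exists A, P A /\ forall B, P B -> (forall x, A x -> B x) -> forall x, B x -> A x.
Proof.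
intros HP.
destruct (@Zorn_bigcup T P) as [A [PA HA]].
- intros F FP tot. 
  assert (E : bigcup F (fun X => X) = (fun x => exists X, F X /\ X x)).
  { apply functional_extensionality; intro x.
    apply propositional_extensionality.
    split; [intros [X H1 H2]; exists X; split; auto | intros [X [H1 H2]]; exists X; auto]. }
  rewrite E. apply HP; [exact FP|].
  intros X Y FX FY. destruct (tot X Y FX FY) as [h|h]; [left|right]; intros x; apply h.
- exists A; split; [exact PA|].
  intros B PB AB x Bx.
  apply NNPP; intro nA.
  apply (HA B); [|exact PB].
  split; [intros y; apply AB|].
  intro BA. apply nA. apply BA. exact Bx.
Qed.
End ZornAux.

Infix "**" := hmul (at level 40, left associativity).

Section Basic.
Variable R : hyperring.

Lemma mul1r (x : R) : x ** hone R = x.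
Proof. rewrite hmul_comm. apply hmul_1l. Qed.
Lemma mulr0 (x : R) : x ** hzero R = hzero R.
Proof. rewrite hmul_comm. apply hmul_0l. Qed.
Lemma mulCA (x y z : R) : x ** (y ** z) = y ** (x ** z).
Proof. rewrite !hmul_assoc, (hmul_comm x y). reflexivity. Qed.
Lemma mulAC (x y z : R) : x ** y ** z = x ** z ** y.
Proof. rewrite <- !hmul_assoc, (hmul_comm y z). reflexivity. Qed.
Lemma mul4 (a b c d : R) : a ** b ** (c ** d) = a ** c ** (b ** d).
Proof. rewrite !hmul_assoc. f_equal. rewrite <- !hmul_assoc. f_equal. apply hmul_comm. Qed.

Lemma hadd_0r (x z : R) : hadd x (hzero R) z <-> z = x.
Proof. rewrite hadd_comm. apply hadd_0l. Qed.

Lemma mulrN (x y : R) : x ** hneg y = hneg (x ** y).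
Proof.
  apply hneg_unique.
  apply (proj1 (hmul_distr x y (hneg y) (hzero R))).
  exists (hzero R). split; [apply hadd_negr| symmetry; apply mulr0].
Qed.

Lemma negK (x : R) : hneg (hneg x) = x.
Proof. symmetry. apply hneg_unique. apply hadd_comm. apply hadd_negr. Qed.

Lemma mul_cancel : hyperdomain R -> forall u a b : R, u <> hzero R -> u ** a = u ** b -> a = b.
Proof.
  intros hd u a b hu e.
  assert (h0 : hadd (u ** a) (u ** hneg b) (hzero R)).
  { rewrite e, mulrN. apply hadd_negr. }
  apply (proj2 (hmul_distr u a (hneg b) (hzero R))) in h0.
  destruct h0 as [w [hw ew]].
  symmetry in ew. destruct (hd _ _ ew) as [H|H]; [contradiction|subst w].
  apply hneg_unique in hw.
  rewrite <- (negK b), hw, negK. reflexivity.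
Qed.
End Basic.

Section Prime.
Variable R : hyperring.
Variable p : Spec R.

Lemma pt_prime : prime_hyperideal (pt p).
Proof. exact (proj2_sig p). Qed.

Lemma pt0 : pt p (hzero R).
Proof. destruct pt_prime as [[h0 _] _]. apply h0. reflexivity. Qed.
Lemma pt_not1 : ~ pt p (hone R).
Proof. destruct pt_prime as [_ [h _]]. exact h. Qed.
Lemma pt_mull (x y : R) : pt p y -> pt p (x ** y).
Proof. destruct pt_prime as [[_ [_ hm]] _]. intro h. eapply hm; [exact h| reflexivity]. Qed.
Lemma pt_mulr (x y : R) : pt p x -> pt p (x ** y).
Proof. rewrite hmul_comm. apply pt_mull. Qed.
Lemma pt_add (x y z : R) : pt p x -> pt p y -> hadd x y z -> pt p z.
Proof. destruct pt_prime as [[_ [ha _]] _]. intros h1 h2 h3. exact (ha x y z h1 h2 h3). Qed.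
Lemma pt_prod (x y : R) : pt p (x ** y) -> pt p x \/ pt p y.
Proof. destruct pt_prime as [_ [_ h]]. apply h. Qed.
Lemma npt_mul (x y : R) : ~ pt p x -> ~ pt p y -> ~ pt p (x ** y).
Proof. intros h1 h2 h. destruct (pt_prod h); auto. Qed.
Lemma npt_nz (x : R) : ~ pt p x -> x <> hzero R.
Proof. intros h e; subst; apply h, pt0. Qed.
End Prime.

Section LocFacts.
Variable R : hyperring.
Hypothesis hd : hyperdomain R.
Variable p : Spec R.

Definition fr (x y : R * R) : Prop :=
  ~ pt p (snd x) /\ ~ pt p (snd y) /\ fst x ** snd y = fst y ** snd x.

Lemma loc_rel_fr x y : loc_rel p x y <-> fr x y.
Proof.
  unfold loc_rel, fr. split.
  - intros [h1 [h2 [u [hu e]]]]. repeat split; auto.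
    eapply mul_cancel; eauto. eapply npt_nz; eauto.
  - intros [h1 [h2 e]]. repeat split; auto. exists (hone R). split.
    + apply pt_not1.
    + rewrite e. reflexivity.
Qed.

Lemma fr_sym x y : fr x y -> fr y x.
Proof. unfold fr. intros [h1 [h2 e]]. auto. Qed.

Lemma fr_trans x y z : fr x y -> fr y z -> fr x z.
Proof.
  destruct x as [x1 x2], y as [y1 y2], z as [z1 z2]. unfold fr; simpl.
  intros [h1 [h2 e1]] [_ [h3 e2]]. repeat split; auto.
  apply (mul_cancel hd (u := y2)); [eapply npt_nz; eauto|].
  transitivity (x1 ** y2 ** z2).
  { rewrite mulCA. rewrite hmul_assoc. reflexivity. }
  rewrite e1, mulAC, e2, mulAC, hmul_comm. reflexivity.
Qed.

Lemma fr_refl x : ~ pt p (snd x) -> fr x x.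
Proof. intros; unfold fr; auto. Qed.

Lemma lrep_ex (c : Loc p) : exists r t, lrep c (r, t).
Proof.
  destruct c as [c [r [t [ht ->]]]]. exists r, t. unfold lrep; simpl.
  apply loc_rel_fr, fr_refl. exact ht.
Qed.

Lemma lrep_iff (c : Loc p) x y : lrep c x -> (lrep c y <-> fr x y).
Proof.
  destruct c as [c [r [t [ht ->]]]]. unfold lrep; simpl.
  rewrite !loc_rel_fr. intro hx. split.
  - intro hy. eapply fr_trans; [apply fr_sym, hx| exact hy].
  - intro hy. eapply fr_trans; eauto.
Qed.

Lemma lrep_snd (c : Loc p) x : lrep c x -> ~ pt p (snd x).
Proof. intro h. destruct (proj1 (lrep_iff x h) h) as [H _]. exact H. Qed.

Lemma loc_eq (c1 c2 : Loc p) x : lrep c1 x -> lrep c2 x -> c1 = c2.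
Proof.
  intros h1 h2.
  assert (E : proj1_sig c1 = proj1_sig c2).
  { apply functional_extensionality; intro y. apply propositional_extensionality.
    change (lrep c1 y <-> lrep c2 y). rewrite (lrep_iff y h1), (lrep_iff y h2). tauto. }
  destruct c1 as [c1 pc1], c2 as [c2 pc2]. simpl in E. subst c2.
  f_equal. apply proof_irrelevance.
Qed.

Lemma lrep_fr (c : Loc p) x y : lrep c x -> lrep c y -> fr x y.
Proof. intros h1 h2. exact (proj1 (lrep_iff y h1) h2). Qed.

Definition lclass (r t : R) (ht : ~ pt p t) : Loc p :=
  exist _ (loc_rel p (r, t)) (ex_intro _ r (ex_intro _ t (conj ht eq_refl))).

Lemma lclass_rep r t ht : lrep (@lclass r t ht) (r, t).
Proof. unfold lrep; simpl. apply loc_rel_fr, fr_refl. exact ht. Qed.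

Lemma num_indep (c : Loc p) a f a' f' : lrep c (a, f) -> lrep c (a', f') -> pt p a -> pt p a'.
Proof.
  intros h1 h2 ha. destruct (lrep_fr h1 h2) as [hf [hf' e]]. simpl in *.
  assert (pt p (a' ** f)) by (rewrite <- e; apply pt_mulr; exact ha).
  destruct (pt_prod H); tauto.
Qed.

Lemma loc_mul_rep (c1 c2 c3 : Loc p) x1 x2 :
  lrep c1 x1 -> lrep c2 x2 ->
  (loc_mul c1 c2 c3 <-> lrep c3 (fst x1 ** fst x2, snd x1 ** snd x2)).
Proof.
  intros h1 h2. split.
  - intros [r1 [t1 [r2 [t2 [k1 [k2 k3]]]]]].
    apply (proj2 (lrep_iff _ k3)).
    destruct (lrep_fr k1 h1) as [a1 [b1 e1]]. destruct (lrep_fr k2 h2) as [a2 [b2 e2]].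
    destruct x1 as [x11 x12], x2 as [x21 x22]; simpl in *.
    repeat split; simpl; try (apply npt_mul; auto).
    rewrite mul4, e1, e2, mul4. reflexivity.
  - intro h3. destruct x1 as [x11 x12], x2 as [x21 x22].
    exists x11, x12, x21, x22. auto.
Qed.

Lemma fr_const a b : fr (a, hone R) (b, hone R) <-> a = b.
Proof.
  unfold fr; simpl. rewrite !mul1r. split; [tauto|].
  intros ->. repeat split; apply pt_not1.
Qed.

Lemma loc_mul_const (c1 c2 c3 : Loc p) a b c :
  lrep c1 (a, hone R) -> lrep c2 (b, hone R) -> lrep c3 (c, hone R) ->
  (loc_mul c1 c2 c3 <-> c = a ** b).
Proof.
  intros h1 h2 h3. rewrite (loc_mul_rep _ h1 h2). simpl.
  rewrite (lrep_iff _ h3). rewrite hmul_1l. rewrite fr_const. split; auto.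
Qed.

Lemma loc_add_const (c1 c2 c3 : Loc p) a b c :
  lrep c1 (a, hone R) -> lrep c2 (b, hone R) -> lrep c3 (c, hone R) ->
  (loc_add c1 c2 c3 <-> hadd a b c).
Proof.
  intros h1 h2 h3. split.
  - intros [r1 [t1 [r2 [t2 [y [k1 [k2 [ky k3]]]]]]]].
    destruct (lrep_fr h1 k1) as [_ [n1 e1]]. destruct (lrep_fr h2 k2) as [_ [n2 e2]].
    destruct (lrep_fr h3 k3) as [_ [n3 e3]]. simpl in *.
    rewrite mul1r in e1, e2, e3. subst r1 r2 y.
    assert (E1 : a ** t1 ** t2 = t1 ** t2 ** a) by (rewrite (hmul_comm (t1 ** t2) a), hmul_assoc; reflexivity).
    assert (E2 : t1 ** (b ** t2) = t1 ** t2 ** b) by (rewrite (hmul_comm b t2), hmul_assoc; reflexivity).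
    rewrite E1, E2 in ky.
    apply (proj2 (hmul_distr _ _ _ _)) in ky. destruct ky as [w [hw ew]].
    replace c with w; [exact hw|].
    apply (mul_cancel hd (u := t1 ** t2)); [apply npt_nz with p, npt_mul; auto|].
    rewrite <- ew. apply hmul_comm.
  - intro h. exists a, (hone R), b, (hone R), c. repeat split; auto.
    + rewrite mul1r, hmul_1l. exact h.
    + rewrite hmul_1l. exact h3.
Qed.
End LocFacts.

Lemma exist_eq (A : Type) (P : A -> Prop) (x y : A) (px : P x) (py : P y) :
  x = y -> exist P x px = exist P y py.
Proof. intros ->. f_equal. apply proof_irrelevance. Qed.

Section Sections.
Variable R : hyperring.
Hypothesis hd : hyperdomain R.

Lemma open_True : is_open (fun _ : Spec R => True).
Proof. intros p _. exists (hone R). split; [apply pt_not1| auto]. Qed.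

Lemma open_inter (U V : Spec R -> Prop) :
  is_open U -> is_open V -> is_open (fun q => U q /\ V q).
Proof.
  intros hU hV p [up vp]. destruct (hU p up) as [f [hf Hf]]. destruct (hV p vp) as [g [hg Hg]].
  exists (f ** g). split; [apply npt_mul; auto|].
  intros q hq. split; [apply Hf| apply Hg]; intro h; apply hq;
    [apply pt_mulr| apply pt_mull]; exact h.
Qed.

Lemma open_D (f : R) : is_open (fun q : Spec R => ~ pt q f).
Proof. intros p hp. exists f. auto. Qed.

Lemma sec_ext (U : Spec R -> Prop) (s t : sec U) : (forall p h, sval s p h = sval t p h) -> s = t.
Proof.
  destruct s as [s hs], t as [t ht]. unfold sval; simpl. intro E.
  assert (s = t) by (apply functional_extensionality_dep; intro p;
                     apply functional_extensionality; intro h; apply E).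
  subst t. f_equal. apply proof_irrelevance.
Qed.

Definition secfrac (U : Spec R -> Prop) (hU : is_open U) (a f : R) (hf : forall p, U p -> ~ pt p f) : sec U.
Proof.
  refine (exist _ (fun p h => @lclass R p a f (hf p h)) _).
  intros p hp. exists U. repeat split; auto. exists a, f. intros q hq _.
  split; [auto| apply lclass_rep; exact hd].
Defined.

Lemma secfrac_rep (U : Spec R -> Prop) (hU : is_open U) a f hf p h :
  lrep (sval (@secfrac U hU a f hf) p h) (a, f).
Proof. apply lclass_rep; exact hd. Qed.

Definition constsec (r : R) : sec (fun _ : Spec R => True) :=
  @secfrac _ open_True r (hone R) (fun p _ => pt_not1 (p:=p)).

Lemma constsec_const r : is_const_sec r (constsec r).
Proof. intros p h. apply secfrac_rep. Qed.

Lemma const_uniq r s : is_const_sec r s -> s = constsec r.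
Proof.
  intro hs. apply sec_ext. intros p h. eapply loc_eq; [exact hd| apply hs| apply constsec_const].
Qed.

Section Stalks.
Variable p : Spec R.

Definition gval (g : germ p) : Loc p := sval (gs g) p (gU_p g).
Definition gnum (g : germ p) : Prop := exists a f, lrep (gval g) (a, f) /\ pt p a.

Lemma sval_pi (U : Spec R -> Prop) (s : sec U) q h1 h2 : sval s q h1 = sval s q h2.
Proof. rewrite (proof_irrelevance _ h1 h2). reflexivity. Qed.

Lemma germ_eq_refl (g : germ p) : germ_eq g g.
Proof.
  exists (gU g). repeat split; auto using gU_p. apply (gU_open g).
  intros. apply sval_pi.
Qed.

Lemma germ_eq_sym (g1 g2 : germ p) : germ_eq g1 g2 -> germ_eq g2 g1.
Proof.
  intros [W [hW [Wp [HW E]]]]. exists W. repeat split; auto; try apply HW; auto.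
  intros. symmetry. apply E. auto.
Qed.

Lemma germ_eq_trans (g1 g2 g3 : germ p) : germ_eq g1 g2 -> germ_eq g2 g3 -> germ_eq g1 g3.
Proof.
  intros [W [hW [Wp [HW E]]]] [W' [hW' [Wp' [HW' E']]]].
  exists (fun q => W q /\ W' q). split; [apply open_inter; auto|].
  split; [split; auto|]. split.
  - intros q0 [a b]. split; [apply (HW q0 a)| apply (HW' q0 b)].
  - intros q0 h1 h3 [a b]. rewrite (E q0 h1 (proj2 (HW q0 a)) a). apply E'. auto.
Qed.

Lemma germ_eq_val (g1 g2 : germ p) : germ_eq g1 g2 -> gval g1 = gval g2.
Proof. intros [W [hW [Wp [HW E]]]]. apply E. exact Wp. Qed.

Lemma stalk_in (c : Stalk p) g1 g2 : proj1_sig c g1 -> proj1_sig c g2 -> germ_eq g1 g2.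
Proof.
  destruct c as [P [g0 ->]]. simpl. intros h1 h2.
  eapply germ_eq_trans; [apply germ_eq_sym, h1| exact h2].
Qed.

Lemma stalk_class (c : Stalk p) g : proj1_sig c g -> c = germ_class g.
Proof.
  destruct c as [P [g0 ->]]. simpl. intro h. unfold germ_class. apply exist_eq.
  apply functional_extensionality; intro x. apply propositional_extensionality. split; intro hx.
  - eapply germ_eq_trans; [apply germ_eq_sym, h| exact hx].
  - eapply germ_eq_trans; eauto.
Qed.

Lemma num_all (g : germ p) a f : gnum g -> lrep (gval g) (a, f) -> pt p a.
Proof. intros [a0 [f0 [h1 h2]]] h. eapply num_indep; [exact hd| exact h1| exact h| exact h2]. Qed.

Definition PP (c : Stalk p) : Prop := exists g, proj1_sig c g /\ gnum g.

Lemma PP_all (c : Stalk p) g : PP c -> proj1_sig c g -> gnum g.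
Proof.
  intros [g' [h' n']] h. pose proof (germ_eq_val (stalk_in h' h)) as E.
  destruct n' as [a [f [r pa]]]. exists a, f. rewrite <- E. auto.
Qed.

Lemma PP_class g : PP (germ_class g) <-> gnum g.
Proof.
  split.
  - intro h. eapply PP_all; [exact h| apply germ_eq_refl].
  - intro h. exists g. split; auto. apply germ_eq_refl.
Qed.

Lemma PP_ideal : @hyperideal (stalk_rstr p) PP.
Proof.
  unfold hyperideal; simpl. split; [|split].
  - intros c [g [hc [W [hW [Wp [HW hz]]]]]]. exists g. split; auto.
    exists (hzero R), (hone R). split; [apply (hz p (gU_p g) Wp)| apply pt0].
  - intros x y z Px Py [g1 [g2 [g3 [h1 [h2 [h3 [W [hW [Wp [HW ha]]]]]]]]]].
    exists g3. split; auto.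
    destruct (ha p (gU_p g1) (gU_p g2) (gU_p g3) Wp) as [r1 [t1 [r2 [t2 [yy [k1 [k2 [ky k3]]]]]]]].
    exists yy, (t1 ** t2). split; [exact k3|].
    assert (pr1 : pt p r1) by (eapply num_all; [eapply PP_all; [exact Px| exact h1]| exact k1]).
    assert (pr2 : pt p r2) by (eapply num_all; [eapply PP_all; [exact Py| exact h2]| exact k2]).
    eapply pt_add; [apply pt_mulr, pr1| apply pt_mull, pr2| exact ky].
  - intros r x z Px [g1 [g2 [g3 [h1 [h2 [h3 [W [hW [Wp [HW hm]]]]]]]]]].
    exists g3. split; auto.
    destruct (hm p (gU_p g1) (gU_p g2) (gU_p g3) Wp) as [r1 [t1 [r2 [t2 [k1 [k2 k3]]]]]].
    exists (r1 ** r2), (t1 ** t2). split; [exact k3|].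
    apply pt_mull. eapply num_all; [eapply PP_all; [exact Px| exact h2]| exact k2].
Qed.

Lemma PP_proper : @proper (stalk_rstr p) PP.
Proof.
  unfold proper; simpl. intros o [g [ho [W [hW [Wp [HW h1]]]]]] hP.
  pose proof (PP_all hP ho) as n.
  apply (pt_not1 (p:=p)). eapply num_all; [exact n| apply (h1 p (gU_p g) Wp)].
Qed.

Lemma unit_lemma (g : germ p) : ~ gnum g ->
  forall J, @hyperideal (stalk_rstr p) J -> J (germ_class g) -> ~ @proper (stalk_rstr p) J.
Proof.
  intros ng J [_ [_ Jm]] Jg Jp.
  destruct (proj2_sig (gs g) p (gU_p g)) as [V [hV [Vp [VU [a0 [f0 HV]]]]]].
  assert (na0 : ~ pt p a0).
  { intro h. apply ng. exists a0, f0. split; auto. apply (HV p (gU_p g) Vp). }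
  set (W := fun q => V q /\ ~ pt q a0).
  assert (hW : is_open W) by (apply open_inter; [exact hV| apply open_D]).
  assert (Wp : W p) by (split; auto).
  set (gi := @Germ R p W hW Wp (@secfrac W hW f0 a0 (fun q hq => proj2 hq))).
  set (g1 := @Germ R p W hW Wp (@secfrac W hW (hone R) (hone R) (fun q _ => pt_not1 (p:=q)))).
  assert (J1 : J (germ_class g1)).
  { apply (Jm (germ_class gi) (germ_class g) (germ_class g1) Jg). simpl.
    exists gi, g, g1. split; [apply germ_eq_refl|]. split; [apply germ_eq_refl|].
    split; [apply germ_eq_refl|].
    exists W. split; [exact hW|]. split; [exact Wp|]. split.
    - intros q0 wq. split; [exact wq| split; [apply VU, (proj1 wq)| exact wq]].
    - intros q k1 k2 k3 [vq aq].
      destruct (HV q k2 vq) as [nf0 hg].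
      apply (proj2 (loc_mul_rep hd _ (secfrac_rep hW f0 (fun q hq => proj2 hq) k1) hg)). simpl.
      apply (proj2 (lrep_iff hd _ (secfrac_rep hW (hone R) (fun q _ => pt_not1 (p:=q)) k3))).
      unfold fr; simpl. repeat split; try apply pt_not1; try (apply npt_mul; auto).
      rewrite hmul_1l, mul1r. apply hmul_comm. }
  apply (Jp (germ_class g1)); [|exact J1].
  simpl. exists g1. split; [apply germ_eq_refl|].
  exists W. split; [exact hW|]. split; [exact Wp|]. split.
  - intros q0 wq. exact wq.
  - intros q0 h wq. apply secfrac_rep.
Qed.

Lemma max_char M : @maximal_hyperideal (stalk_rstr p) M ->
  forall g, M (germ_class g) <-> gnum g.
Proof.
  intros [Mi [Mp Mmax]].
  assert (MP : forall g, M (germ_class g) -> gnum g).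
  { intros g h. apply NNPP. intro n. exact (unit_lemma n Mi h Mp). }
  intro g. split; [apply MP|].
  intro n. apply (Mmax PP PP_ideal PP_proper).
  - intros c Mc. destruct (proj2_sig c) as [g0 e].
    assert (c = germ_class g0).
    { apply stalk_class. rewrite e. apply germ_eq_refl. }
    subst c. apply PP_class. apply MP. exact Mc.
  - apply PP_class. exact n.
Qed.

Lemma PP_max : @maximal_hyperideal (stalk_rstr p) PP.
Proof.
  split; [apply PP_ideal| split; [apply PP_proper|]].
  intros J Ji Jp _ c Jc. destruct (proj2_sig c) as [g0 e].
  assert (c = germ_class g0).
  { apply stalk_class. rewrite e. apply germ_eq_refl. }
  subst c. apply PP_class. apply NNPP. intro n. exact (unit_lemma n Ji Jc Jp).
Qed.
End Stalks.
End Sections.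

Section Global.
Variable R : hyperring.
Hypothesis hd : hyperdomain R.

Lemma prime_of_ideal (J : R -> Prop) : @hyperideal (rstr_of R) J -> ~ J (hone R) ->
  exists q : Spec R, forall x, J x -> pt q x.
Proof.
  intros Ji J1.
  set (P := fun A : R -> Prop => @hyperideal (rstr_of R) A /\ ~ A (hone R) /\ forall x, J x -> A x).
  set (Q := fun A : R -> Prop => (forall x, ~ A x) \/ P A).
  destruct (@ZornAux.zorn_sets R Q) as [A [QA maxA]].
  - intros F FQ tot.
    assert (FP : forall X x, F X -> X x -> P X).
    { intros X x FX Xx. destruct (FQ X FX) as [h|h]; [exfalso; exact (h x Xx)| exact h]. }
    destruct (classic (exists X x, F X /\ X x)) as [[X0 [x0 [FX0 X0x]]]|hn].
    + right. pose proof (FP _ _ FX0 X0x) as [[z0 _] [_ J0]].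
      split; [|split].
      * split; [|split].
        -- intros z ez. exists X0. split; [exact FX0| exact (z0 z ez)].
        -- intros x y z [X1 [F1 x1]] [X2 [F2 y2]] hz.
           destruct (tot X1 X2 F1 F2) as [s12|s21].
           ++ exists X2. split; auto. destruct (FP _ _ F2 y2) as [[_ [ha _]] _].
              exact (ha x y z (s12 x x1) y2 hz).
           ++ exists X1. split; auto. destruct (FP _ _ F1 x1) as [[_ [ha _]] _].
              exact (ha x y z x1 (s21 y y2) hz).
        -- intros r x z [X1 [F1 x1]] hz. exists X1. split; auto.
           destruct (FP _ _ F1 x1) as [[_ [_ hm]] _]. exact (hm r x z x1 hz).
      * intros [X1 [F1 x1]]. destruct (FP _ _ F1 x1) as [_ [h _]]. exact (h x1).
      * intros x Jx. exists X0. split; auto.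
    + left. intros x [X [FX Xx]]. apply hn. exists X, x. auto.
  - assert (PA : P A).
    { destruct QA as [h|h]; [|exact h]. exfalso.
      assert (PJ : Q J) by (right; split; [exact Ji| split; auto]).
      apply (h (hzero R)). apply (maxA J PJ).
      - intros x Ax. exfalso. exact (h x Ax).
      - destruct Ji as [z0 _]. apply z0. reflexivity. }
    destruct PA as [Ai [A1 JA]].
    assert (pA : prime_hyperideal A).
    { split; [exact Ai| split; [exact A1|]].
      intros a b hab. apply NNPP. intro hn. apply not_or_and in hn. destruct hn as [na nb].
      set (K := fun x => A (x ** b)).
      destruct Ai as [Az [Aa Am]].
      assert (AK : forall x, A x -> K x).
      { intros x Ax. unfold K. apply (Am b x); auto. simpl. apply hmul_comm. }
      assert (QK : Q K).
      { right. split; [|split].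
        - split; [|split].
          + intros z ez. simpl in ez. subst z. unfold K. rewrite hmul_0l. apply Az. reflexivity.
          + intros x y z kx ky hz. simpl in hz. unfold K in *.
            assert (h1 : hadd (b ** x) (b ** y) (b ** z)).
            { apply (proj1 (hmul_distr b x y (b ** z))). exists z. auto. }
            rewrite !(hmul_comm b) in h1. exact (Aa _ _ _ kx ky h1).
          + intros r x z kx ez. simpl in ez. subst z. unfold K.
            rewrite <- hmul_assoc. apply (Am r (x ** b)); [exact kx| reflexivity].
        - change (~ A (hone R ** b)). rewrite hmul_1l. exact nb.
        - intros x Jx. apply AK, JA, Jx. }
      apply na. apply (maxA K QK AK). exact hab. }
    exists (exist _ A pA). intros x Jx. apply JA. exact Jx.
Qed.

Definition eta_pred (x : R) : Prop := x = hzero R.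

Lemma eta_prime : prime_hyperideal eta_pred.
Proof.
  unfold eta_pred. split; [split; [|split]|split].
  - intros z ez. exact ez.
  - intros x y z -> -> hz. simpl in hz. apply hadd_0l in hz. exact hz.
  - intros r x z -> ez. simpl in ez. rewrite ez. apply mulr0.
  - intro h. apply (@hzero_neq_one R). symmetry. exact h.
  - intros a b h. apply hd. exact h.
Qed.

Definition eta : Spec R := exist _ eta_pred eta_prime.

Lemma pt_eta x : pt eta x <-> x = hzero R.
Proof. reflexivity. Qed.

Lemma global_const (s : sec (fun _ : Spec R => True)) : exists r, is_const_sec r s.
Proof.
  destruct (lrep_ex hd (sval s eta I)) as [a [f hf]].
  assert (nf : f <> hzero R) by (intro e; exact (lrep_snd hd hf e)).
  assert (key : forall q : Spec R, exists aq fq, ~ pt q fq /\ lrep (sval s q I) (aq, fq)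
                   /\ aq ** f = a ** fq).
  { intro q. destruct (proj2_sig s q I) as [V [hV [Vq [_ [a0 [f0 HV]]]]]].
    destruct (HV q I Vq) as [nq rq].
    assert (Ve : V eta).
    { destruct (hV q Vq) as [g [ng Dg]]. apply Dg. rewrite pt_eta. intro e. subst g.
      apply ng, pt0. }
    destruct (HV eta I Ve) as [_ re].
    destruct (lrep_fr hd hf re) as [_ [_ e]]. simpl in e.
    exists a0, f0. repeat split; auto. }
  set (J := fun d => exists r, d ** a = r ** f).
  assert (Ji : @hyperideal (rstr_of R) J).
  { split; [|split].
    - intros z ez. simpl in ez. subst z. exists (hzero R). rewrite !hmul_0l. reflexivity.
    - intros x y z [r1 e1] [r2 e2] hz. simpl in hz.
      assert (h1 : hadd (a ** x) (a ** y) (a ** z)).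
      { apply (proj1 (hmul_distr a x y (a ** z))). exists z. auto. }
      rewrite !(hmul_comm a), e1, e2, !(hmul_comm _ f) in h1.
      apply (proj2 (hmul_distr _ _ _ _)) in h1. destruct h1 as [w [_ ew]].
      exists w. rewrite ew. apply hmul_comm.
    - intros r x z [r1 e1] ez. simpl in ez. subst z. exists (r ** r1).
      rewrite <- hmul_assoc, e1. apply hmul_assoc. }
  assert (J1 : J (hone R)).
  { apply NNPP. intro n. destruct (prime_of_ideal Ji n) as [q hq].
    destruct (key q) as [aq [fq [nq [rq e]]]]. apply nq, hq.
    exists aq. rewrite e. apply hmul_comm. }
  destruct J1 as [r er]. rewrite hmul_1l in er.
  exists r. intros q h. destruct h.
  destruct (key q) as [aq [fq [nq [rq e]]]].
  apply (proj2 (lrep_iff hd _ rq)).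
  unfold fr; simpl. split; [auto| split; [apply pt_not1|]].
  rewrite mul1r. apply (mul_cancel hd nf).
  rewrite hmul_comm, e, er. rewrite mulAC. rewrite hmul_comm. reflexivity.
Qed.
End Global.

Definition oT (R : hyperring) : is_open (fun _ : Spec R => True) := @open_True R.
Arguments oT : clear implicits.

Lemma spec_eq (R : hyperring) (p1 p2 : Spec R) : pt p1 = pt p2 -> p1 = p2.
Proof. destruct p1, p2. unfold pt; simpl. intro e. apply exist_eq. exact e. Qed.

Lemma gnum_rep (R : hyperring) (hd : hyperdomain R) (p : Spec R) (g : germ p) a f :
  lrep (gval g) (a, f) -> (gnum g <-> pt p a).
Proof.
  intro h. split.
  - intros [a' [f' [h' pa]]]. exact (num_indep hd h' h pa).
  - intro pa. exists a, f. auto.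
Qed.

Section Phi.
Variables R H : hyperring.
Hypothesis hdR : hyperdomain R.
Hypothesis hdH : hyperdomain H.
Variable phi : R -> H.
Hypothesis hphi : is_hom (rstr_of R) (rstr_of H) phi.

Lemma phi_add x y z : hadd x y z -> hadd (phi x) (phi y) (phi z).
Proof. apply (proj1 hphi). Qed.
Lemma phi_mul x y : phi (x ** y) = phi x ** phi y.
Proof. apply (proj1 (proj2 hphi)). reflexivity. Qed.
Lemma phi0 : phi (hzero R) = hzero H.
Proof. apply (proj1 (proj2 (proj2 hphi))). reflexivity. Qed.
Lemma phi1 : phi (hone R) = hone H.
Proof. apply (proj2 (proj2 (proj2 hphi))). reflexivity. Qed.

Section Pre.
Variable q : Spec H.
Definition pre_pred (r : R) : Prop := pt q (phi r).
Lemma pre_prime : prime_hyperideal pre_pred.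
Proof.
  unfold pre_pred. split; [split; [|split]|split].
  - intros z ez. simpl in ez. subst z. rewrite phi0. apply pt0.
  - intros x y z hx hy hz. eapply pt_add; [exact hx| exact hy| apply phi_add, hz].
  - intros r x z hx ez. simpl in ez. subst z. rewrite phi_mul. apply pt_mull, hx.
  - rewrite phi1. apply pt_not1.
  - intros a b h. rewrite phi_mul in h. apply pt_prod, h.
Qed.
Definition pre : Spec R := exist _ pre_pred pre_prime.

Lemma limg_ex (c : Loc pre) : exists x, lrep c x.
Proof. destruct (lrep_ex hdR c) as [r [t h]]. exists (r, t). exact h. Qed.

Definition limg (c : Loc pre) : Loc q.
Proof.
  destruct (constructive_indefinite_description _ (limg_ex c)) as [x hx].
  exact (@lclass H q (phi (fst x)) (phi (snd x)) (lrep_snd hdR hx)).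
Defined.

Lemma limg_rep (c : Loc pre) r t : lrep c (r, t) -> lrep (limg c) (phi r, phi t).
Proof.
  intro h. unfold limg. destruct (constructive_indefinite_description _ (limg_ex c)) as [[x1 x2] hx].
  simpl. apply (proj2 (lrep_iff hdH _ (lclass_rep hdH _ (lrep_snd hdR hx)))).
  destruct (lrep_fr hdR hx h) as [n1 [n2 e]]. simpl in *.
  unfold fr; simpl. repeat split; auto. rewrite <- !phi_mul, e. reflexivity.
Qed.

Lemma limg_add (c1 c2 c3 : Loc pre) : loc_add c1 c2 c3 -> loc_add (limg c1) (limg c2) (limg c3).
Proof.
  intros [r1 [t1 [r2 [t2 [y [k1 [k2 [ky k3]]]]]]]].
  exists (phi r1), (phi t1), (phi r2), (phi t2), (phi y).
  split; [apply limg_rep, k1|]. split; [apply limg_rep, k2|].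
  split; [rewrite <- !phi_mul; apply phi_add, ky|].
  rewrite <- phi_mul. apply limg_rep, k3.
Qed.

Lemma limg_mul (c1 c2 c3 : Loc pre) : loc_mul c1 c2 c3 -> loc_mul (limg c1) (limg c2) (limg c3).
Proof.
  intros [r1 [t1 [r2 [t2 [k1 [k2 k3]]]]]].
  exists (phi r1), (phi t1), (phi r2), (phi t2).
  split; [apply limg_rep, k1|]. split; [apply limg_rep, k2|].
  rewrite <- !phi_mul. apply limg_rep, k3.
Qed.
End Pre.

Lemma pre_cont (U : Spec R -> Prop) : is_open U -> is_open (fun q => U (pre q)).
Proof.
  intros hU q hq. destruct (hU (pre q) hq) as [f [nf Df]].
  exists (phi f). split; [exact nf|]. intros q' h. apply Df. exact h.
Qed.

Definition mshphi (U : Spec R -> Prop) (hU : is_open U) (s : sec U) : sec (fun q => U (pre q)).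
Proof.
  refine (exist _ (fun q h => limg (sval s (pre q) h)) _).
  intros q hq. destruct (proj2_sig s (pre q) hq) as [V [hV [Vp [VU [a [f HV]]]]]].
  exists (fun q' => V (pre q')). split; [apply pre_cont, hV|]. split; [exact Vp|].
  split; [intros q' h; apply VU, h|].
  exists (phi a), (phi f). intros q' hq' vq'. destruct (HV _ hq' vq') as [nf rf].
  split; [exact nf| apply limg_rep, rf].
Defined.

Definition morph : lhs_morph R H := @LHSMorph R H pre pre_cont mshphi.

Lemma morph_is : is_morphism morph.
Proof.
  split; [|split].
  - intros U hU. split; [|split; [|split]]; simpl.
    + intros s t r h q hq. apply limg_add, h.
    + intros s t r h q hq. apply limg_mul, h.
    + intros s h q hq. unfold loc_zero. rewrite <- phi0, <- phi1. apply limg_rep, h.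
    + intros s h q hq. unfold loc_one. rewrite <- phi1. apply limg_rep, h.
  - intros U V hU hV VU s s' hr q hUq hVq. simpl. rewrite (hr (pre q) hUq hVq). reflexivity.
  - intros q M N hM hN g. rewrite (max_char hdR hM g), (max_char hdH hN (germ_map g)).
    destruct (lrep_ex hdR (gval g)) as [a [f h]].
    rewrite (gnum_rep hdR h).
    assert (h' : lrep (gval (germ_map g)) (phi a, phi f)) by (apply limg_rep, h).
    rewrite (gnum_rep hdH h'). reflexivity.
Qed.

Lemma morph_glob : global_hom morph phi.
Proof.
  intros hT r s s' hs hs'. apply sec_ext. intros q h. simpl.
  apply (loc_eq hdH (x := (phi r, hone H))); [| apply hs'].
  rewrite <- phi1. apply limg_rep, hs.
Qed.

Section Gen.
Variable m : lhs_morph R H.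
Hypothesis hm : is_morphism m.
Hypothesis hg : global_hom m phi.

Lemma mf_pre q : pt (mf m q) = fun r => pt q (phi r).
Proof.
  apply functional_extensionality; intro r. apply propositional_extensionality.
  set (g := @Germ R (mf m q) (fun _ => True) (oT R) I (constsec hdR r)).
  pose proof (proj2 (proj2 hm) q _ _ (PP_max hdR (mf m q)) (PP_max hdH q) g) as L.
  rewrite !PP_class in L.
  assert (hr : lrep (gval g) (r, hone R)) by apply constsec_const.
  rewrite (gnum_rep hdR hr) in L.
  assert (E : msh m (oT R) (constsec hdR r) = constsec hdH (phi r)).
  { pose proof hg as hg0. unfold global_hom in hg0. eapply hg0; apply constsec_const. }
  assert (h' : lrep (gval (germ_map g)) (phi r, hone H)).
  { change (lrep (sval (msh m (oT R) (constsec hdR r)) q I) (phi r, hone H)).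
    rewrite E. apply constsec_const. }
  rewrite (gnum_rep hdH h') in L. exact L.
Qed.

Lemma msh_val (U : Spec R -> Prop) (hU : is_open U) (s : sec U) q (h : U (mf m q)) a f :
  lrep (sval s (mf m q) h) (a, f) -> lrep (sval (msh m hU s) q h) (phi a, phi f).
Proof.
  intro ha.
  destruct (proj2_sig s (mf m q) h) as [V [hV [Vp [VU [a0 [f0 HV]]]]]].
  assert (hf0 : forall p, V p -> ~ pt p f0) by (intros p vp; exact (proj1 (HV p (VU p vp) vp))).
  assert (h1 : forall p : Spec R, V p -> ~ pt p (hone R)) by (intros p _; apply pt_not1).
  set (sV := @secfrac R hdR V hV a0 f0 hf0).
  set (AV := @secfrac R hdR V hV a0 (hone R) h1).
  set (FV := @secfrac R hdR V hV f0 (hone R) h1).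
  set (IV := @secfrac R hdR V hV (hone R) f0 hf0).
  set (OV := @secfrac R hdR V hV (hone R) (hone R) h1).
  destruct (proj1 hm V hV) as [_ [hmul [_ hone']]].
  pose proof (proj1 (proj2 hm)) as compat.
  assert (M1 : forall p hp, loc_mul (sval AV p hp) (sval IV p hp) (sval sV p hp)).
  { intros p hp.
    assert (rA : lrep (sval AV p hp) (a0, hone R)) by exact (secfrac_rep hdR hV a0 h1 hp).
    assert (rI : lrep (sval IV p hp) (hone R, f0)) by exact (secfrac_rep hdR hV (hone R) hf0 hp).
    apply (proj2 (loc_mul_rep hdR _ rA rI)).
    simpl. rewrite mul1r, hmul_1l. exact (secfrac_rep hdR hV a0 hf0 hp). }
  assert (M2 : forall p hp, loc_mul (sval FV p hp) (sval IV p hp) (sval OV p hp)).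
  { intros p hp.
    assert (rF : lrep (sval FV p hp) (f0, hone R)) by exact (secfrac_rep hdR hV f0 h1 hp).
    assert (rI : lrep (sval IV p hp) (hone R, f0)) by exact (secfrac_rep hdR hV (hone R) hf0 hp).
    assert (rO : lrep (sval OV p hp) (hone R, hone R)) by exact (secfrac_rep hdR hV (hone R) h1 hp).
    apply (proj2 (loc_mul_rep hdR _ rF rI)).
    simpl. rewrite mul1r, hmul_1l.
    apply (proj2 (lrep_iff hdR _ rO)).
    unfold fr; simpl. repeat split; auto using pt_not1. rewrite ?hmul_1l, ?mul1r. reflexivity. }
  assert (O1 : forall p hp, loc_one (sval OV p hp)) by (intros p hp; exact (secfrac_rep hdR hV (hone R) h1 hp)).
  pose proof (hmul AV IV sV M1) as N1. pose proof (hmul FV IV OV M2) as N2.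
  pose proof (hone' OV O1) as N3.
  simpl in N1, N2, N3.
  assert (RA : forall c : R, forall (CV : sec V), (forall p hp, lrep (sval CV p hp) (c, hone R)) ->
            lrep (sval (msh m hV CV) q Vp) (phi c, hone H)).
  { intros c CV hC.
    assert (rs : restricts (constsec hdR c) CV).
    { intros p hU' hV'. apply (loc_eq hdR (x := (c, hone R))); [apply hC| apply constsec_const]. }
    pose proof (compat _ V (oT R) hV (fun _ _ => I) _ _ rs q I Vp) as E. rewrite E.
    assert (E2 : msh m (oT R) (constsec hdR c) = constsec hdH (phi c)) by (pose proof hg as hg0; unfold global_hom in hg0; eapply hg0; apply constsec_const).
    rewrite E2. apply constsec_const. }
  pose proof (RA a0 AV (fun p hp => secfrac_rep hdR hV a0 h1 hp)) as rA.
  pose proof (RA f0 FV (fun p hp => secfrac_rep hdR hV f0 h1 hp)) as rF.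
  destruct (lrep_ex hdH (sval (msh m hV IV) q Vp)) as [x [t rI]].
  pose proof (proj1 (loc_mul_rep hdH _ rF rI) (N2 q Vp)) as k2.
  pose proof (proj1 (loc_mul_rep hdH _ rA rI) (N1 q Vp)) as k1.
  simpl in k1, k2.
  destruct (lrep_fr hdH (N3 q Vp) k2) as [_ [_ et]]. simpl in et.
  rewrite !hmul_1l, mul1r in et.
  assert (rs : restricts s sV).
  { intros p hU' hV'. apply (loc_eq hdR (x := (a0, f0))); [exact (secfrac_rep hdR hV a0 hf0 hV')| apply (HV p hU' hV')]. }
  pose proof (compat U V hU hV VU s sV rs q h Vp) as E. rewrite <- E.
  apply (proj2 (lrep_iff hdH _ k1)).
  destruct (lrep_fr hdR (proj2 (HV _ h Vp)) ha) as [_ [nf e]]. simpl in nf, e.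
  rewrite mf_pre in nf. cbv beta in nf.
  unfold fr; simpl. split; [rewrite hmul_1l; exact (lrep_snd hdH rI)|].
  split; [exact nf|].
  rewrite hmul_1l, et, mulAC, <- phi_mul, e, phi_mul. symmetry. apply hmul_assoc.
Qed.
End Gen.
End Phi.

Lemma morph_unique (R H : hyperring) (hdR : hyperdomain R) (hdH : hyperdomain H)
  (phi : R -> H) (hphi : is_hom (rstr_of R) (rstr_of H) phi) (m1 m2 : lhs_morph R H) :
  is_morphism m1 -> global_hom m1 phi -> is_morphism m2 -> global_hom m2 phi -> m1 = m2.
Proof.
  intros h1 g1 h2 g2.
  assert (E : mf m1 = mf m2).
  { apply functional_extensionality; intro q. apply spec_eq.
    rewrite (mf_pre hdR hdH h1 g1), (mf_pre hdR hdH h2 g2). reflexivity. }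
  pose proof (msh_val hdR hdH hphi h1 g1) as K1.
  pose proof (msh_val hdR hdH hphi h2 g2) as K2.
  clear h1 g1 h2 g2.
  destruct m1 as [f1 c1 s1], m2 as [f2 c2 s2]. simpl in *. subst f2.
  assert (c1 = c2) by apply proof_irrelevance. subst c2.
  f_equal. apply functional_extensionality_dep; intro U.
  apply functional_extensionality_dep; intro hU. apply functional_extensionality; intro s.
  apply sec_ext. intros q h.
  destruct (lrep_ex hdR (sval s (f1 q) h)) as [a [f ha]].
  apply (loc_eq hdH (x := (phi a, phi f))); [apply K1, ha| apply K2, ha].
Qed.

Section Induced.
Variables R H : hyperring.
Hypothesis hdR : hyperdomain R.
Hypothesis hdH : hyperdomain H.
Variable m : lhs_morph R H.
Hypothesis hm : is_morphism m.

Definition ind_phi (r : R) : H :=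
  proj1_sig (constructive_indefinite_description _
    (global_const hdH (msh m (oT R) (constsec hdR r)))).

Lemma ind_spec r : is_const_sec (ind_phi r) (msh m (oT R) (constsec hdR r)).
Proof. unfold ind_phi. destruct (constructive_indefinite_description _ _) as [x hx]. exact hx. Qed.

Lemma ind_hom : is_hom (rstr_of R) (rstr_of H) ind_phi.
Proof.
  destruct (proj1 hm (fun _ => True) (oT R)) as [ha [hmu [hz ho]]].
  set (e := eta hdH).
  split; [|split; [|split]]; simpl.
  - intros x y z hxyz.
    assert (A : forall p hp, loc_add (sval (constsec hdR x) p hp) (sval (constsec hdR y) p hp)
                                    (sval (constsec hdR z) p hp)).
    { intros p hp. apply (proj2 (loc_add_const hdR (constsec_const hdR x p hp)
          (constsec_const hdR y p hp) (constsec_const hdR z p hp))). exact hxyz. }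
    pose proof (ha _ _ _ A e I) as B. simpl in B.
    exact (proj1 (loc_add_const hdH (ind_spec x e I) (ind_spec y e I) (ind_spec z e I)) B).
  - intros x y z ez. subst z.
    assert (A : forall p hp, loc_mul (sval (constsec hdR x) p hp) (sval (constsec hdR y) p hp)
                                    (sval (constsec hdR (x ** y)) p hp)).
    { intros p hp. apply (proj2 (loc_mul_const hdR (constsec_const hdR x p hp)
          (constsec_const hdR y p hp) (constsec_const hdR (x ** y) p hp))). reflexivity. }
    pose proof (hmu _ _ _ A e I) as B. simpl in B.
    exact (proj1 (loc_mul_const hdH (ind_spec x e I) (ind_spec y e I) (ind_spec (x ** y) e I)) B).
  - intros z ez. subst z.
    assert (A : forall p hp, loc_zero (sval (constsec hdR (hzero R)) p hp))
      by (intros p hp; apply constsec_const).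
    pose proof (hz _ A e I) as B. simpl in B. unfold loc_zero in B.
    pose proof (lrep_fr hdH B (ind_spec (hzero R) e I)) as F.
    apply fr_const in F. symmetry. exact F.
  - intros z ez. subst z.
    assert (A : forall p hp, loc_one (sval (constsec hdR (hone R)) p hp))
      by (intros p hp; apply constsec_const).
    pose proof (ho _ A e I) as B. simpl in B. unfold loc_one in B.
    pose proof (lrep_fr hdH B (ind_spec (hone R) e I)) as F.
    apply fr_const in F. symmetry. exact F.
Qed.

Lemma ind_glob : global_hom m ind_phi.
Proof.
  intros hT r s s' hs hs'. rewrite (const_uniq hdR hs).
  rewrite (proof_irrelevance _ hT (oT R)).
  apply sec_ext. intros q h.
  apply (loc_eq hdH (x := (ind_phi r, hone H))); [apply ind_spec| apply hs'].
Qed.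

Lemma ind_uniq phi' : global_hom m phi' -> ind_phi = phi'.
Proof.
  intro g. apply functional_extensionality; intro r.
  assert (E : msh m (oT R) (constsec hdR r) = constsec hdH (phi' r))
    by (apply (g (oT R) r); apply constsec_const).
  pose proof (ind_spec r (eta hdH) I) as k. rewrite E in k.
  pose proof (lrep_fr hdH k (constsec_const hdH (phi' r) (eta hdH) I)) as F.
  apply fr_const in F. exact F.
Qed.
End Induced.

Unset Implicit Arguments.

Theorem proposition4p31 (R H : hyperring) :
  hyperdomain R -> hyperdomain H ->
  (forall phi : R -> H, is_hom (rstr_of R) (rstr_of H) phi ->
     (exists! m : lhs_morph R H, is_morphism m /\ global_hom m phi) /\
     (forall m : lhs_morph R H, is_morphism m -> global_hom m phi ->
        forall q : Spec H, pt (mf m q) = (fun r => pt q (phi r)))) /\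
  (forall m : lhs_morph R H, is_morphism m ->
     exists! phi : R -> H, is_hom (rstr_of R) (rstr_of H) phi /\ global_hom m phi).
Proof.
  intros hdR hdH. split.
  - intros phi hphi. split.
    + exists (morph hdR hdH hphi). split.
      * split; [apply morph_is| apply morph_glob].
      * intros m' [h1 h2]. apply (morph_unique hdR hdH hphi); auto.
        -- apply morph_is.
        -- apply morph_glob.
    + intros m hm hg q. exact (mf_pre hdR hdH hm hg q).
  - intros m hm. exists (ind_phi hdR hdH m). split.
    + split; [apply ind_hom; exact hm| apply ind_glob].
    + intros phi' [_ g]. apply ind_uniq. exact g.
Qed.
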